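(* Let $f:\mathbb{N}\to\mathbb{N}$ be a unary extended polynomial. Then there exists $m\in\mathbb{N}$ such that for all $n_1,n_2\geq m$, if $n_1\geq n_2$ then $f(n_1)\geq f(n_2)$.
   Context: The class of extended polynomials is the smallest class of functions $\mathbb{N}^k\to\mathbb{N}$ (of all arities $k$) that contains the constant functions $0$ and $1$, all projections, addition, multiplication, and the function $\mathrm{ifzero}(n,m,p)=m$ if $n=0$ and $=p$ otherwise, and that is closed under composition. *)

(* Defs.v *)
From Stdlib Require Import Arith Fin.

Definition kfun (k : nat) : Type := (Fin.t k -> nat) -> nat.

Definition ifzero (n m p : nat) : nat := match n with 0 => m | _ => p end.

Definition F0_2 : Fin.t 2 := Fin.F1.
Definition F1_2 : Fin.t 2 := Fin.FS Fin.F1.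
Definition F0_3 : Fin.t 3 := Fin.F1.
Definition F1_3 : Fin.t 3 := Fin.FS Fin.F1.
Definition F2_3 : Fin.t 3 := Fin.FS (Fin.FS Fin.F1).

Inductive ext_poly : forall k : nat, kfun k -> Prop :=
| ep_zero (k : nat) : ext_poly k (fun _ => 0)
| ep_one (k : nat) : ext_poly k (fun _ => 1)
| ep_proj (k : nat) (i : Fin.t k) : ext_poly k (fun x => x i)
| ep_add : ext_poly 2 (fun x => x F0_2 + x F1_2)
| ep_mul : ext_poly 2 (fun x => x F0_2 * x F1_2)
| ep_ifzero : ext_poly 3 (fun x => ifzero (x F0_3) (x F1_3) (x F2_3))
| ep_comp (k j : nat) (f : kfun k) (g : Fin.t k -> kfun j) :
    ext_poly k f -> (forall i, ext_poly j (g i)) ->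
    ext_poly j (fun x => f (fun i => g i x)).

Definition unary_ext_poly (f : nat -> nat) : Prop :=
  ext_poly 1 (fun x => f (x Fin.F1)).

(* Main.v *)
Require Import Defs.
From Stdlib Require Import Arith Lia Fin.

Inductive Poly : (nat -> nat) -> Prop :=
| P_const c : Poly (fun _ => c)
| P_id : Poly (fun n => n)
| P_add p q : Poly p -> Poly q -> Poly (fun n => p n + q n)
| P_mul p q : Poly p -> Poly q -> Poly (fun n => p n * q n).

Lemma Poly_mono p : Poly p -> forall n m, n <= m -> p n <= p m.
Proof.
  induction 1; intros n m Hnm; try lia.
  - specialize (IHPoly1 n m Hnm); specialize (IHPoly2 n m Hnm); lia.
  - specialize (IHPoly1 n m Hnm); specialize (IHPoly2 n m Hnm).
    apply Nat.mul_le_mono; assumption.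
Qed.

Lemma Poly_sign p : Poly p ->
  (forall n, 1 <= n -> p n = 0) \/ (forall n, 1 <= n -> 0 < p n).
Proof.
  induction 1.
  - destruct c; [left|right]; intros; lia.
  - right; intros; lia.
  - destruct IHPoly1 as [A|A], IHPoly2 as [B|B].
    + left; intros n Hn; rewrite (A n Hn), (B n Hn); lia.
    + right; intros n Hn; specialize (B n Hn); lia.
    + right; intros n Hn; specialize (A n Hn); lia.
    + right; intros n Hn; specialize (B n Hn); lia.
  - destruct IHPoly1 as [A|A].
    + left; intros n Hn; rewrite (A n Hn); lia.
    + destruct IHPoly2 as [B|B].
      * left; intros n Hn; rewrite (B n Hn); lia.
      * right; intros n Hn; specialize (A n Hn); specialize (B n Hn);
        apply Nat.mul_pos_pos; assumption.
Qed.

Definition EP (h : nat -> nat) : Prop :=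
  exists p, Poly p /\ exists N, forall n, N <= n -> h n = p n.

Definition Q (k : nat) (f : kfun k) : Prop :=
  forall u : Fin.t k -> nat -> nat, (forall i, EP (u i)) ->
    EP (fun n => f (fun i => u i n)).

Lemma main k f : ext_poly k f -> Q k f.
Proof.
  induction 1; unfold Q; intros u Hu.
  - exists (fun _ => 0); split; [constructor|exists 0; auto].
  - exists (fun _ => 1); split; [constructor|exists 0; auto].
  - apply Hu.
  - destruct (Hu F0_2) as [p [Hp [N1 H1]]].
    destruct (Hu F1_2) as [q [Hq [N2 H2]]].
    exists (fun n => p n + q n); split; [constructor; auto|].
    exists (N1 + N2); intros n Hn; rewrite H1, H2; lia.
  - destruct (Hu F0_2) as [p [Hp [N1 H1]]].
    destruct (Hu F1_2) as [q [Hq [N2 H2]]].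
    exists (fun n => p n * q n); split; [constructor; auto|].
    exists (N1 + N2); intros n Hn; rewrite H1, H2; lia.
  - destruct (Hu F0_3) as [p [Hp [N0 H0]]].
    destruct (Hu F1_3) as [q [Hq [N1 H1]]].
    destruct (Hu F2_3) as [r [Hr [N2 H2]]].
    destruct (Poly_sign p Hp) as [A|A].
    + exists q; split; auto. exists (1 + N0 + N1); intros n Hn.
      rewrite H0 by lia. rewrite A by lia. simpl. apply H1; lia.
    + exists r; split; auto. exists (1 + N0 + N2); intros n Hn.
      rewrite H0 by lia. specialize (A n ltac:(lia)).
      destruct (p n); [lia|]. simpl. apply H2; lia.
  - apply IHext_poly. intros i. apply H1. exact Hu.
Qed.

Theorem proposition1 (f : nat -> nat) (hf : unary_ext_poly f) :
  exists m : nat, forall n1 n2 : nat,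
    m <= n1 -> m <= n2 -> n2 <= n1 -> f n2 <= f n1.
Proof.
  destruct (main _ _ hf (fun _ n => n)) as [p [Hp [N HN]]].
  { intros i. exists (fun n => n); split; [constructor|exists 0; auto]. }
  exists N; intros n1 n2 A B C.
  pose proof (HN n1 A) as E1; pose proof (HN n2 B) as E2; simpl in *.
  rewrite E1, E2. apply Poly_mono; auto.
Qed.
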